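(* Let $(P_t)_{t\in\mathbb{R}_+}$ be a stochastically monotone Feller semigroup on $\mathbb{R}$. For $t\ge0$, $n\ge2$ and $\mathbf{x}=(x_1,\dots,x_n)\in\overline{\mathbb{R}}^n$, let $Q^{(n)}_t(\mathbf{x},\cdot)$ be the law on $\overline{\mathbb{R}}^n$ of $(F^{[-1]}_{x_i,t}(U))_{1\le i\le n}$, where $U$ is uniform on $[0,1]$. Then for all $t\ge0$ and $n\ge2$, $Q^{(n)}_t$ is an order-preserving Markov kernel on $\overline{\mathbb{R}}^n$, and for all $t\ge0$, the family $(Q^{(n)}_t)_{n\ge1}$ with $Q^{(1)}_t=\tilde{P}_t$ is consistent.
   Context: $\overline{\mathbb{R}}=[-\infty,+\infty]$ with the metric $|\tanh y-\tanh x|$, and $\overline{\mathbb{R}}^n$ with the product topology. For $x\in\mathbb{R}$, $F^{[-1]}_{x,t}(u)=\inf\{y\in\mathbb{R}:P_t(x,(-\infty,y])\ge u\}$, and $F^{[-1]}_{\pm\infty,t}\equiv\pm\infty$. $\tilde{P}_t(x,B)=P_t(x,B\cap\mathbb{R})$ for $x\in\mathbb{R}$, $\tilde{P}_t(\pm\infty,\cdot)=\delta_{\pm\infty}$. A kernel $K$ on $\overline{\mathbb{R}}^n$ is order-preserving if for all $\mathbf{x}$, $K(\mathbf{x},\cdot)$-a.s. $\mathbf{y}$ satisfies $x_i\le x_j\Rightarrow y_i\le y_j$ for all $i,j$. A family $(K^{(n)})_{n\ge1}$ of kernels on the powers $S^n$ is consistent if $K^{(n)}(\mathbf{x},(\pi^n_{i_1,\dots,i_k})^{-1}(B))=K^{(k)}(\pi^n_{i_1,\dots,i_k}(\mathbf{x}),B)$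 for all $1\le k\le n$, $i_1,\dots,i_k\in\{1,\dots,n\}$ (repetitions allowed), $\mathbf{x}\in S^n$, measurable $B\subset S^k$, where $\pi^n_{i_1,\dots,i_k}(\mathbf{x})=(x_{i_1},\dots,x_{i_k})$. Feller and stochastically monotone are as usual: $P_t$ maps $\mathcal{C}_0(\mathbb{R})$ into itself with $\sup|P_tf-f|\to0$ as $t\to 0^+$, and $P_t$ maps bounded non-decreasing functions to non-decreasing functions. *)

(* Defs.v *)
From HB Require Import structures.
From mathcomp Require Import all_boot all_order all_algebra.
From mathcomp Require Import all_classical all_reals all_analysis.
From mathcomp Require Import measurable_realfun.
Import Order.TTheory GRing.Theory Num.Theory numFieldNormedType.Exports.

Set Implicit Arguments.
Unset Strict Implicit.
Unset Printing Implicit Defensive.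

Local Open Scope classical_set_scope.
Local Open Scope ring_scope.

Section defs.
Variable R : realType.

Definition C0 (f : R -> R) : Prop :=
  continuous f /\ (f x @[x --> +oo%R] --> 0) /\ (f x @[x --> -oo%R] --> 0).

Definition kact (k : R.-pker R ~> R) (f : R -> R) (x : R) : \bar R :=
  (\int[k x]_y (f y)%:E)%E.

(* A family (P_t)_{t >= 0} of Markov (probability) kernels on R,
   indexed by t : R (values for t < 0 are irrelevant). *)
Definition feller_semigroup (P : R -> R.-pker R ~> R) : Prop :=
  (forall x B, measurable B -> P 0 x B = \d_x B) /\
  (forall s t, 0 <= s -> 0 <= t -> forall x B, measurable B ->
     P (s + t) x B = (\int[P s x]_y P t y B)%E) /\
  (forall t, 0 <= t -> forall f, C0 f -> C0 (fun x => fine (kact (P t) f x))) /\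
  (forall f, C0 f -> forall eps : R, 0 < eps -> exists2 delta : R, 0 < delta &
     forall t, 0 < t < delta -> forall x, `|fine (kact (P t) f x) - f x| <= eps).

Definition stochastically_monotone (P : R -> R.-pker R ~> R) : Prop :=
  forall t, 0 <= t -> forall f : R -> R,
    (exists M : R, forall y, `|f y| <= M) ->
    {homo f : y z / y <= z} ->
    {homo kact (P t) f : x x' / x <= x' >-> (x <= x')%E}.

Definition Finv (P : R -> R.-pker R ~> R) (t : R) (x : \bar R) (u : R) : \bar R :=
  match x with
  | r%:E => ereal_inf [set y%:E | y in [set y : R | (u%:E <= P t r [set` `]-oo, y]])%E]]
  | +oo%E => +oo%E
  | -oo%E => -oo%E
  end.

Definition Ptilde (P : R -> R.-pker R ~> R) (t : R) (x : \bar R) (B : set (\bar R)) : \bar R :=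
  match x with
  | r%:E => P t r (EFin @^-1` B)
  | +oo%E => \d_(+oo%E) B
  | -oo%E => \d_(-oo%E) B
  end.

Definition Qn (P : R -> R.-pker R ~> R) (t : R) (n : nat)
    (x : n.-tuple (\bar R)) (B : set (n.-tuple (\bar R))) : \bar R :=
  lebesgue_measure
    ([set` `[0%R, 1%R]] `&` [set u | B [tuple Finv P t (tnth x i) u | i < n]]).

(* the family (Q^{(n)}_t)_{n >= 1} with Q^{(1)}_t = tilde P_t
   (\bar R^1 identified with 1-tuples) *)
Definition Qfam (P : R -> R.-pker R ~> R) (t : R) (n : nat)
    (x : n.-tuple (\bar R)) (B : set (n.-tuple (\bar R))) : \bar R :=
  if n == 1%N then Ptilde P t (nth 0%E x 0) [set y | B [tuple y | _ < n]]
  else Qn P t x B.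

End defs.

Definition is_markov_kernel (R : realType) d (T : measurableType d)
    (K : T -> set T -> \bar R) : Prop :=
  exists k : R.-pker T ~> T, forall x B, measurable B -> k x B = K x B.

Definition order_preserving (R : realType) (n : nat)
    (K : n.-tuple (\bar R) -> set (n.-tuple (\bar R)) -> \bar R) : Prop :=
  forall x : n.-tuple (\bar R), exists N : set (n.-tuple (\bar R)),
    [/\ measurable N, K x N = 0%E &
        forall y, ~ N y -> forall i j : 'I_n,
          (tnth x i <= tnth x j)%E -> (tnth y i <= tnth y j)%E].

Definition proj_coords (T : Type) (n k : nat) (idx : 'I_k -> 'I_n)
    (x : n.-tuple T) : k.-tuple T := [tuple tnth x (idx j) | j < k].

Definition consistent (R : realType)
    (K : forall n : nat, n.-tuple (\bar R) -> set (n.-tuple (\bar R)) -> \bar R) : Prop :=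
  forall (k n : nat), (1 <= k)%N -> (k <= n)%N ->
  forall (idx : 'I_k -> 'I_n) (x : n.-tuple (\bar R)) (B : set (k.-tuple (\bar R))),
    measurable B ->
    K n x (proj_coords idx @^-1` B) = K k (proj_coords idx x) B.

(* Main.v *)
Require Import Defs.
From HB Require Import structures.
From mathcomp Require Import all_boot all_order all_algebra.
From mathcomp Require Import all_classical all_reals all_analysis.
From mathcomp Require Import measurable_realfun.
Import Order.TTheory GRing.Theory Num.Theory numFieldNormedType.Exports.
Local Open Scope classical_set_scope.
Local Open Scope ring_scope.
Section S.
Variable R : realType.
Variable P : R -> R.-pker R ~> R.
Variable t : R.
Local Open Scope ereal_scope.

Lemma Pt_le1 (r : R) (A : set R) : measurable A -> P t r A <= 1.
Proof.
move=> mA; rewrite -(@prob_kernel _ _ _ _ _ (P t) r).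
by apply: le_measure; rewrite ?inE.
Qed.

Lemma Finv_le (r c u : R) :
  (Finv P t r%:E u <= c%:E) <-> (u%:E <= P t r [set` `]-oo, c]]).
Proof.
split; last first.
  by move=> h; apply: ereal_inf_lbound; exists c.
move=> h.
have key k : u%:E <= P t r [set` `]-oo, (c + k.+1%:R^-1)%R]].
  have : ereal_inf [set y%:E | y in [set y : R | (u%:E <= P t r [set` `]-oo, y]])%E]]
      < (c + k.+1%:R^-1)%:E.
    by apply: le_lt_trans h _; rewrite lte_fin ltrDl.
  case/ereal_inf_lt => _ [y Sy <-]; rewrite lte_fin => yc.
  apply: (le_trans Sy); apply: le_measure; rewrite ?inE//.
  by apply: subset_itvl; rewrite bnd_simp ltW.
have cv : (P t r) \o (fun k => [set` `]-oo, (c + k.+1%:R^-1)%R]]) @ \oo -->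
    P t r (\bigcap_k [set` `]-oo, (c + k.+1%:R^-1)%R]]).
  apply: nonincreasing_cvg_mu => //.
  - by rewrite (le_lt_trans (Pt_le1 _ _ _)) ?ltry.
  - by apply: bigcapT_measurable => k.
  - move=> m n mn; apply/subsetPset; apply: subset_itvl.
    by rewrite bnd_simp lerD2l lef_pV2 ?posrE// ler_nat.
rewrite (itvNycEbigcap false c).
rewrite -(cvg_lim _ cv)//; apply: lime_ge; first by apply/cvg_ex; eexists; exact: cv.
by apply: nearW => k; exact: key.
Qed.

End S.
Section S2.
Variable R : realType.
Variable P : R -> R.-pker R ~> R.
Variable t : R.
Local Open Scope ereal_scope.

Let H (z : \bar R * R) := Finv P t z.1 z.2.

Let Sle_eq (c : R) : [set z | H z <= c%:E] =
  (fst @^-1` [set -oo]) `|`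
  ((fst @^-1` range EFin) `&` [set z | (z.2)%:E <= P t (fine z.1) [set` `]-oo, c]]]).
Proof.
apply/seteqP; split => -[[a| |] u] /=; rewrite /H /=.
- by move=> /Finv_le h; right; split => //; exists a.
- by rewrite leye_eq.
- by move=> _; left.
- by case=> // -[_ /=] /Finv_le.
- by case=> // -[[b _]].
- by move=> _; rewrite leNye.
Qed.

Let Sle_meas (c : R) : measurable [set z | H z <= c%:E].
Proof.
rewrite Sle_eq; apply: measurableU.
  by rewrite -[X in measurable X]setTI; apply: measurable_fst => //; exact: emeasurable_set1.
apply: measurableI.
  rewrite -[X in measurable X]setTI; apply: measurable_fst => //.
  exact: (@measurable_image_EFin R setT measurableT).

rewrite -[X in measurable X]setTI; apply: (measurable_lee measurableT).
  exact: measurableT_comp.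
have mk := @measurable_kernel _ _ _ _ _ (P t) _ (measurable_itv `]-oo, c]).
apply: (measurableT_comp mk).
apply: measurableT_comp => //; exact: fine_measurable.
Qed.

Lemma measurable_Finv : measurable_fun setT H.
Proof.
apply: (measurability _ (ErealGenInftyO.measurableE R)) => _ [_ [r ->] <-].
rewrite setTI.
have -> : H @^-1` `]-oo, r%:E[ = \bigcup_k [set z | H z <= (r - k.+1%:R^-1)%:E].
  apply/seteqP; split => z /=.
    rewrite in_itv /=; case E: (H z) => [s| |] //.
      rewrite lte_fin => /ltr_add_invr[k hk]; exists k => //=.
      by rewrite E lee_fin lerBrDr ltW.
    by move=> _; exists 0%N => //=; rewrite E leNye.
  case=> k _ /= hk; rewrite in_itv /=; apply: (le_lt_trans hk).
  by rewrite lte_fin ltrBlDr ltrDl.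
by apply: bigcupT_measurable => k; exact: Sle_meas.
Qed.

End S2.
Section S4.
Variable R : realType.
Variable P : R -> R.-pker R ~> R.
Variable t : R.
Hypothesis hm : stochastically_monotone P.
Hypothesis t0 : (0 <= t)%R.
Local Open Scope ereal_scope.

Lemma Pt_cdf_anti (r s y : R) : (r <= s)%R ->
  P t s [set` `]-oo, y]] <= P t r [set` `]-oo, y]].
Proof.
move=> rs.
pose B := [set` `]y, +oo[] : set R.
have mB : measurable B by exact: measurable_itv.
have hB z : P t z [set` `]-oo, y]] = 1 - P t z B.
  have <- : P t z ([set` `]-oo, y]] `|` B) = 1.
    have -> : [set` `]-oo, y]] `|` B = setT.
      apply/seteqP; split => // w _ /=; rewrite /B /= !in_itv /= andbT.
      by case: (leP w y) => h; [left|right].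
    exact: (@prob_kernel _ _ _ _ _ (P t) z).
  rewrite measureU //; last first.
    apply/seteqP; split => // w [] /=; rewrite /B /= !in_itv /= andbT => h1 h2.
    by have := lt_le_trans h2 h1; rewrite ltxx.
  rewrite addeK // ge0_fin_numE ?measure_ge0//.
  by rewrite (le_lt_trans (@Pt_le1 R P t z B mB)) ?ltry.
rewrite !hB; apply: leeB => //.
have := @hm t t0 (\1_B) _ _ r s rs.
  rewrite /kact !integral_indic // !setIT; apply.
- exists 1%R => z; rewrite indicE; case: (z \in B); rewrite ?normr1 ?normr0 //.
- move=> z1 z2 h; rewrite !indicE.
  have [h1|h1] := boolP (z1 \in B); last by rewrite ler0n.
  have -> // : z2 \in B.
  apply/mem_set; move/set_mem: h1; rewrite /B /= !in_itv /= !andbT => h1.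
  exact: lt_le_trans h1 h.
Qed.

Lemma Finv_mono (a b : \bar R) u : a <= b -> Finv P t a u <= Finv P t b u.
Proof.
case: a => [r| |]; case: b => [s| |] //=.
- rewrite lee_fin => rs; apply: ereal_inf_le_tmp => _ [y hy <-]; exists y => //=.
  exact: (le_trans hy (@Pt_cdf_anti r s y rs)).
all: move=> h; rewrite ?leey ?leNye ?lexx //.
all: by move: h; rewrite ?leeNy_eq ?leye_eq.
Qed.

End S4.
Section mypf_sec.
Context d1 d2 (T1 : measurableType d1) (T2 : measurableType d2) (R : realType).
Variables (m : {measure set T1 -> \bar R}) (f : T1 -> T2).

Definition mypf (mf : measurable_fun setT f) (A : set T2) : \bar R := m (f @^-1` A).

Variable mf : measurable_fun setT f.
Local Open Scope ereal_scope.

Let mypf0 : mypf mf set0 = 0.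
Proof. by rewrite /mypf preimage_set0 measure0. Qed.

Let mypf_ge0 A : 0 <= mypf mf A.
Proof. exact: measure_ge0. Qed.

Let mypf_sa : semi_sigma_additive (mypf mf).
Proof.
move=> F mF tF mUF; rewrite /mypf preimage_bigcup.
apply: measure_semi_sigma_additive.
- by move=> n; rewrite -[X in measurable X]setTI; exact: mf.
- apply/trivIsetP => /= i j _ _ ij; rewrite -preimage_setI.
  by move/trivIsetP : tF => /(_ _ _ _ _ ij) ->//; rewrite preimage_set0.
- by rewrite -preimage_bigcup -[X in measurable X]setTI; exact: mf.
Qed.

HB.instance Definition _ := isMeasure.Build _ _ _ (mypf mf) mypf0 mypf_ge0 mypf_sa.

End mypf_sec.

Section S5.
Variable R : realType.
Variable P : R -> R.-pker R ~> R.
Variable t : R.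
Local Open Scope ereal_scope.

Lemma Pt_compl (r c : R) :
  P t r [set` `]c, +oo[] = 1 - P t r [set` `]-oo, c]].
Proof.
pose B := [set` `]c, +oo[] : set R.
have mB : measurable B by exact: measurable_itv.
have <- : P t r ([set` `]-oo, c]] `|` B) = 1.
  have -> : [set` `]-oo, c]] `|` B = setT.
    apply/seteqP; split => // w _ /=; rewrite /B /= !in_itv /= andbT.
    by case: (leP w c) => h; [left|right].
  exact: (@prob_kernel _ _ _ _ _ (P t) r).
rewrite measureU //; last first.
  apply/seteqP; split => // w [] /=; rewrite /B /= !in_itv /= andbT => h1 h2.
  by have := lt_le_trans h2 h1; rewrite ltxx.
rewrite addeAC subee ?add0e // ge0_fin_numE ?measure_ge0//.
by rewrite (le_lt_trans (@Pt_le1 R P t r _ (measurable_itv _))) ?ltry.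
Qed.

Let m01 : measurable ([set` `[0%R, 1%R]] : set R) := measurable_itv _.

Lemma law_real (r : R) (C : set (\bar R)) : measurable C ->
  lebesgue_measure ([set` `[0%R, 1%R]] `&` [set u | C (Finv P t r%:E u)]) =
  P t r (EFin @^-1` C).
Proof.
move=> mC.
have mF : measurable_fun setT (fun u : R => Finv P t r%:E u).
  exact: (@measurable_fun_pair2 _ _ _ _ _ _ (fun z : \bar R * R => Finv P t z.1 z.2) r%:E (@measurable_Finv R P t)).
have mE : measurable_fun setT (@EFin R) by exact: EFin_measurable.
pose m1 := @mypf _ _ _ _ R (mrestr lebesgue_measure m01) _ mF.
pose m2 := @mypf _ _ _ _ R (P t r) _ mE.
have -> : lebesgue_measure ([set` `[0%R, 1%R]] `&` [set u | C (Finv P t r%:E u)]) = m1 C.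
  by rewrite /m1 /mypf /mrestr setIC.
have -> : P t r (EFin @^-1` C) = m2 C by [].
pose G := [set A : set (\bar R) | A = setT \/ exists c : R, A = `]c%:E, +oo[%classic].
have hs : m1 setT = 1.
  rewrite /m1 /mypf preimage_setT /mrestr /=.
  transitivity (lebesgue_measure ([set` `[0%R, 1%R]] : set R)).
    by congr (lebesgue_measure _); apply/seteqP; split => x //= [].
  by rewrite lebesgue_measure_itv /= lte_fin ltr01 sube0.
apply: (@measure_unique _ _ _ G (fun=> setT)) => //.
- apply/seteqP; split.
    have mEE : @measurable _ (\bar R) = <<s @ErealGenOInfty.G R >>.
      exact: ErealGenOInfty.measurableE.
    rewrite mEE; apply: smallest_sub; first exact: smallest_sigma_algebra.
    by move=> _ [c ->]; apply: sub_sigma_algebra; right; exists c.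
  apply: smallest_sub; first exact: sigma_algebra_measurable.
  by move=> _ [->|[c ->]]; [exact: measurableT|exact: emeasurable_itv].
- move=> A B [->|[a ->]] [->|[b ->]]; rewrite ?setTI ?setIT.
  + by left.
  + by right; exists b.
  + by right; exists a.
  + right; case: (leP a b) => ab; [exists b|exists a]; apply/seteqP; split => x /=;
      rewrite !in_itv /= ?andbT.
    * by case.
    * by move=> h; split => //; apply: le_lt_trans h; rewrite lee_fin.
    * by case.
    * by move=> h; split => //; apply: le_lt_trans h; rewrite lee_fin ltW.
- by move=> _; left.
- by rewrite bigcup_const.
- move=> A [->|[c ->]].
    transitivity (1 : \bar R); first exact: hs.
    by symmetry; exact: (@prob_kernel _ _ _ _ _ (P t) r).
  have [p hp] : exists p : R, P t r [set` `]-oo, c]] = p%:E.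
    exists (fine (P t r [set` `]-oo, c]])); rewrite fineK // ge0_fin_numE ?measure_ge0//.
    by rewrite (le_lt_trans (@Pt_le1 R P t r _ (measurable_itv _))) ?ltry.
  have p0 : (0 <= p)%R by rewrite -lee_fin -hp measure_ge0.
  have p1 : (p <= 1)%R by rewrite -lee_fin -hp (@Pt_le1 R P t r _ (measurable_itv _)).
  transitivity ((1 - p)%:E); last first.
    transitivity (P t r [set` `]c, +oo[]); first by rewrite Pt_compl hp.
    rewrite /m2; unfold mypf; congr (P t r _).
  rewrite /m1 /mypf /mrestr /=.
  transitivity (lebesgue_measure ([set` `]p, 1%R]] : set R)); last first.
    rewrite lebesgue_measure_itv /= lte_fin.
    case: (ltP p 1%R) => hp1 //.
    have -> : p = 1%R by apply/eqP; rewrite eq_le p1 hp1.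
    by rewrite subrr.
  congr (lebesgue_measure _).
  apply/seteqP; split => x; rewrite /= !in_itv /= ?andbT.
    case=> h /andP[_ ->]; rewrite andbT -lte_fin -hp ltNge; apply/negP => /Finv_le.
    by rewrite leNgt h.
  case/andP => px ->; split.
    rewrite ltNge; apply/negP => /Finv_le; rewrite hp lee_fin leNgt px.
    by [].
  by rewrite (le_trans p0 (ltW px)).
- by move=> _; rewrite [X in (X < _)%E](_ : _ = 1) ?ltry //; exact: hs.
Qed.

End S5.
Section S6.
Variable R : realType.
Variable P : R -> R.-pker R ~> R.
Variable t : R.
Local Open Scope ereal_scope.

Lemma law (a : \bar R) (C : set (\bar R)) : measurable C ->
  lebesgue_measure ([set` `[0%R, 1%R]] `&` [set u | C (Finv P t a u)]) = Ptilde P t a C.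
Proof.
case: a => [r| |] mC /=; first exact: law_real.
- rewrite diracE; have [h|h] := boolP (+oo \in C).
    transitivity (lebesgue_measure ([set` `[0%R, 1%R]] : set R)).
      congr (lebesgue_measure _); apply/seteqP; split => x /=; first by case.
      by move=> hx; split => //; rewrite -in_setE.
    by rewrite lebesgue_measure_itv /= lte_fin ltr01 sube0.
  transitivity (lebesgue_measure (set0 : set R)); last by rewrite measure0.
  congr (lebesgue_measure _); apply/seteqP; split => x //= [_ hx].
  by move/negP: h; apply; exact: mem_set.
- rewrite diracE; have [h|h] := boolP (-oo \in C).
    transitivity (lebesgue_measure ([set` `[0%R, 1%R]] : set R)).
      congr (lebesgue_measure _); apply/seteqP; split => x /=; first by case.
      by move=> hx; split => //; rewrite -in_setE.
    by rewrite lebesgue_measure_itv /= lte_fin ltr01 sube0.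
  transitivity (lebesgue_measure (set0 : set R)); last by rewrite measure0.
  congr (lebesgue_measure _); apply/seteqP; split => x //= [_ hx].
  by move/negP: h; apply; exact: mem_set.
Qed.

Lemma measurable_tuple1 : measurable_fun setT (fun y : \bar R => [tuple y | _ < 1]).
Proof.
apply/measurable_fun_tnthP => i.
have -> : (@tnth 1 (\bar R) ^~ i \o (fun y : \bar R => [tuple y | _ < 1])) = id.
  by apply/funext => y /=; rewrite tnth_mktuple.
exact: measurable_id.
Qed.

Lemma Qfam_consistent : consistent (Qfam P t).
Proof.
move=> k n k1 kn idx x B mB.
rewrite /Qfam.
have [/eqP ek|ek] := boolP (k == 1%N).
  subst k.
  have mC : measurable [set y : \bar R | B [tuple y | _ < 1]].
    by rewrite -[X in measurable X]setTI; exact: (measurable_tuple1 measurableT _ mB).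
  have [/eqP en|en] := boolP (n == 1%N).
    subst n.
    have hidx j : idx j = j.
      by apply: val_inj; rewrite (ord1 (idx j)) (ord1 j).
    have -> : proj_coords idx x = x.
      by apply: eq_from_tnth => j; rewrite tnth_mktuple hidx.
    congr (Ptilde P t _ _); apply/seteqP; split => y /=.
      suff -> : proj_coords idx [tuple y | _ < 1] = [tuple y | _ < 1] by [].
      by apply: eq_from_tnth => j; rewrite !tnth_mktuple.
    suff -> : proj_coords idx [tuple y | _ < 1] = [tuple y | _ < 1] by [].
    by apply: eq_from_tnth => j; rewrite !tnth_mktuple.
  rewrite -law //; rewrite /Qn; congr (lebesgue_measure _).
  congr (_ `&` _); apply/seteqP; split => u /=.
    suff -> : proj_coords idx [tuple Finv P t (tnth x i) u | i < n] =
      [tuple Finv P t (nth 0 (proj_coords idx x) 0) u | _ < 1] by [].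
    apply: eq_from_tnth => j; rewrite !tnth_mktuple (ord1 j).
    by rewrite -(tnth_nth 0 (proj_coords idx x) ord0) tnth_mktuple.
  suff -> : proj_coords idx [tuple Finv P t (tnth x i) u | i < n] =
      [tuple Finv P t (nth 0 (proj_coords idx x) 0) u | _ < 1] by [].
  apply: eq_from_tnth => j; rewrite !tnth_mktuple (ord1 j).
  by rewrite -(tnth_nth 0 (proj_coords idx x) ord0) tnth_mktuple.
have -> : (n == 1%N) = false.
  by apply/negbTE; apply: contra ek => /eqP n1; rewrite eqn_leq k1 -n1 kn.
rewrite /Qn; congr (lebesgue_measure _); congr (_ `&` _).
apply/seteqP; split => u /=.
  suff -> : proj_coords idx [tuple Finv P t (tnth x i) u | i < n] =
    [tuple Finv P t (tnth (proj_coords idx x) i) u | i < k] by [].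
  by apply: eq_from_tnth => j; rewrite !tnth_mktuple.
suff -> : proj_coords idx [tuple Finv P t (tnth x i) u | i < n] =
  [tuple Finv P t (tnth (proj_coords idx x) i) u | i < k] by [].
by apply: eq_from_tnth => j; rewrite !tnth_mktuple.
Qed.

Hypothesis hm : stochastically_monotone P.
Hypothesis t0 : (0 <= t)%R.

Lemma Qn_order (n : nat) : order_preserving (Qn P t (n:=n)).
Proof.
move=> x.
pose N := \bigcup_(ij in [set: 'I_n * 'I_n])
  (if tnth x ij.1 <= tnth x ij.2 then
     [set y : n.-tuple (\bar R) | tnth y ij.2 < tnth y ij.1] else set0).
exists N; split.
- apply: fin_bigcup_measurable; first exact: finite_finset.
  move=> [i j] _ /=; case: ifP => _; last exact: measurable0.
  rewrite -[X in measurable X]setTI; apply: (measurable_lte measurableT).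
  + exact: measurable_tnth.
  + exact: measurable_tnth.
- transitivity (lebesgue_measure (set0 : set R)); last by rewrite measure0.
  rewrite /Qn; congr (lebesgue_measure _); apply/seteqP; split => u //= [_].
  case=> -[i j] _ /=; case: ifP => // hij /=.
  rewrite !tnth_mktuple => hlt.
  have := @Finv_mono R P t hm t0 _ _ u hij; rewrite leNgt hlt.
  by [].
- move=> y Ny i j hij; rewrite leNgt; apply/negP => hlt; apply: Ny.
  by exists (i, j) => //=; rewrite hij.
Qed.

End S6.
Section S3.
Variable R : realType.
Variable P : R -> R.-pker R ~> R.
Variable t : R.
Variable n : nat.
Local Open Scope ereal_scope.

Definition Fz (z : n.-tuple (\bar R) * R) : n.-tuple (\bar R) :=
  [tuple Finv P t (tnth z.1 i) z.2 | i < n].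

Lemma measurable_Fz : measurable_fun setT Fz.
Proof.
apply/measurable_fun_tnthP => i.
have -> : (@tnth n (\bar R) ^~ i \o Fz) =
    (fun z : \bar R * R => Finv P t z.1 z.2) \o (fun z => (tnth z.1 i, z.2)).
  by apply/funext => z /=; rewrite tnth_mktuple.
apply: measurableT_comp; first exact: measurable_Finv.
apply: (measurable_fun_pair _ measurable_snd).
exact: (measurableT_comp (measurable_tnth i) measurable_fst).
Qed.

Let m01 : measurable ([set` `[0%R, 1%R]] : set R) := measurable_itv _.

Section fixx.
Variable x : n.-tuple (\bar R).

Let QE B : Qn P t x B = mrestr lebesgue_measure m01 ((fun u => Fz (x, u)) @^-1` B).
Proof. by rewrite /Qn /mrestr setIC. Qed.

Let mFx : measurable_fun setT (fun u => Fz (x, u)).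
Proof. exact: measurable_fun_pair2 measurable_Fz. Qed.

Let Q0 : Qn P t x set0 = 0.
Proof. by rewrite QE preimage_set0 measure0. Qed.

Let Q_ge0 B : 0 <= Qn P t x B.
Proof. exact: measure_ge0. Qed.

Let Q_sa : semi_sigma_additive (Qn P t x).
Proof.
move=> F mF tF mUF.
have -> : (fun k => \sum_(0 <= i < k) Qn P t x (F i)) =
   (fun k => \sum_(0 <= i < k) mrestr lebesgue_measure m01 ((fun u => Fz (x, u)) @^-1` F i)).
  by apply/funext => k; apply: eq_bigr => i _; exact: QE.
rewrite QE preimage_bigcup.
apply: measure_semi_sigma_additive.
- by move=> k; rewrite -[X in measurable X]setTI; exact: mFx.
- apply/trivIsetP => /= i j _ _ ij; rewrite -preimage_setI.
  by move/trivIsetP : tF => /(_ _ _ _ _ ij) ->//; rewrite preimage_set0.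
- by rewrite -preimage_bigcup -[X in measurable X]setTI; exact: mFx.
Qed.

HB.instance Definition _ := isMeasure.Build _ _ R (Qn P t x) Q0 Q_ge0 Q_sa.

End fixx.

Definition Qmeas (x : n.-tuple (\bar R)) : {measure set (n.-tuple (\bar R)) -> \bar R} :=
  Qn P t x.

Let Qmeas_kernel U : measurable U -> measurable_fun [set: n.-tuple (\bar R)] (Qmeas ^~ U).
Proof.
move=> mU.
pose A := (setT `*` [set` `[0%R, 1%R]]) `&` (Fz @^-1` U).
have mA : measurable A.
  apply: measurableI; first exact: measurableX.
  by rewrite -[X in measurable X]setTI; exact: measurable_Fz.
have -> : (Qmeas ^~ U) = lebesgue_measure \o xsection A.
  apply/funext => x /=; rewrite /Qmeas /Qn /=; congr (lebesgue_measure _).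
  apply/seteqP; split => u /=; rewrite /xsection /= inE /A /=.
    by case=> u01 Uu; split.
  by case=> -[_ u01] Uu; split.
exact: measurable_fun_xsection.
Qed.

HB.instance Definition _ := isKernel.Build _ _ _ _ R Qmeas Qmeas_kernel.

Let Qmeas_prob x : Qmeas x [set: n.-tuple (\bar R)] = 1.
Proof.
rewrite /Qmeas /= /Qn.
have -> : [set` `[0%R, 1%R]] `&` [set u | [set: n.-tuple (\bar R)] (Fz (x, u))] =
   [set` `[0%R, 1%R]] by apply/seteqP; split => u //= [].
by rewrite lebesgue_measure_itv /= lte_fin ltr01 sube0.
Qed.

HB.instance Definition _ := Kernel_isProbability.Build _ _ _ _ R Qmeas Qmeas_prob.

Lemma Qn_markov : is_markov_kernel (Qn P t (n:=n)).
Proof. by exists Qmeas. Qed.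

End S3.

Theorem proposition3p2 (R : realType) (P : R -> R.-pker R ~> R) :
  feller_semigroup P -> stochastically_monotone P ->
  (forall t : R, 0 <= t -> forall n : nat, (2 <= n)%N ->
     is_markov_kernel (Qn P t (n:=n)) /\ order_preserving (Qn P t (n:=n))) /\
  (forall t : R, 0 <= t -> consistent (Qfam P t)).
Proof.
move=> _ hm; split.
- move=> t t0 n _; split; first exact: Qn_markov.
  exact: Qn_order.
- move=> t _; exact: Qfam_consistent.
Qed.
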